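(* Let $\Phi=\{\varphi_i\}_{i\in\Lambda}$ be a similarity IFS in $\mathbb{R}^d$ with attractor $K$. The following are equivalent: (1) $K$ is not contained in an affine hyperplane; (2) there exists a section $\Pi\subset\Lambda^*$ such that the IFS $\{\varphi_i\}_{i\in\Pi}$ is diffuse; (3) $K$ is hyperplane diffuse.
   Context: A similarity IFS is a finite family of contracting similarities of $\mathbb{R}^d$; the attractor $K$ is the nonempty compact set with $K=\bigcup_i\varphi_iK$; for $i=i_1\dots i_n\in\Lambda^*$, $\varphi_i=\varphi_{i_1}\circ\cdots\circ\varphi_{i_n}$. A section is a finite set $\Pi\subset\Lambda^*$ such that the cylinders $[i]=\{j\in\Lambda^{\mathbb{N}}: i\text{ is a prefix of }j\}$, $i\in\Pi$, are pairwise disjoint with union $\Lambda^{\mathbb{N}}$. An IFS $\{\varphi_i\}_{i\in A}$ is diffuse if there is $c>0$ such that for every affine hyperplane $\mathcal{L}$ some $i\in A$ has $\varphi_iK\cap\mathcal{L}^{(c)}=\emptyset$ ($\mathcal{L}^{(c)}$ the open $c$-neighborhood). A closed set $E$ is hyperplane diffuse if there are $\beta,\xi_0>0$ such that for all $\xi\in(0,\xi_0)$, $x\in E$ and affine hyperplanes $\mathcal{L}$, $E\cap B_\xi(x)\setminus\mathcal{L}^{(\beta\xi)}\neq\emptyset$. *)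

(* Defs.v *)
From HB Require Import structures.
From mathcomp Require Import all_boot all_order all_algebra.
From mathcomp Require Import all_classical all_reals all_analysis.
Set Implicit Arguments. Unset Strict Implicit. Unset Printing Implicit Defensive.
Import Order.TTheory GRing.Theory Num.Theory.
Import numFieldNormedType.Exports.
Local Open Scope classical_set_scope.
Local Open Scope ring_scope.

Section Defs.
Variables (R : realType) (d : nat).
Notation V := 'rV[R]_d.

Definition dotv (u v : V) : R := \sum_(k < d) u ord0 k * v ord0 k.
Definition enorm (x : V) : R := Num.sqrt (dotv x x).

Definition contracting_similarity (f : V -> V) : Prop :=
  exists r : R, 0 < r /\ r < 1 /\ forall x y, enorm (f x - f y) = r * enorm (x - y).

Definition is_hyperplane (L : set V) : Prop :=
  exists (a : V) (b : R), a != 0 /\ L = [set x | dotv a x = b].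

Definition open_nbhd (L : set V) (c : R) : set V :=
  [set x | exists2 y, L y & enorm (x - y) < c].

Definition is_attractor (J : Type) (A : set J) (f : J -> V -> V) (K : set V) : Prop :=
  compact K /\ K !=set0 /\ K = \bigcup_(j in A) (f j @` K).

Definition diffuse (J : Type) (A : set J) (f : J -> V -> V) : Prop :=
  exists2 c : R, 0 < c & forall K, is_attractor A f K ->
    forall L, is_hyperplane L -> exists2 j, A j & (f j @` K) `&` open_nbhd L c = set0.

Definition hyperplane_diffuse (E : set V) : Prop :=
  closed E /\
  exists beta : R, exists xi0 : R, 0 < beta /\ 0 < xi0 /\
    forall xi : R, 0 < xi -> xi < xi0 -> forall x, E x ->
      forall L, is_hyperplane L ->
        exists y, [/\ E y, enorm (y - x) < xi & ~ open_nbhd L (beta * xi) y].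
End Defs.

Section Words.
Variables (I : finType) (T : Type).
Definition word_map (phi : I -> T -> T) (w : seq I) : T -> T :=
  foldr (fun i g => phi i \o g) id w.

Definition cylinder (w : seq I) : set (nat -> I) :=
  [set j | mkseq j (size w) = w].

Definition is_section (Pi : seq (seq I)) : Prop :=
  [/\ uniq Pi,
      (forall u v, u \in Pi -> v \in Pi -> u != v -> cylinder u `&` cylinder v = set0)
    & (forall j : nat -> I, exists2 u, u \in Pi & cylinder u j)].
End Words.

(* Main.v *)
Require Import Defs.
From HB Require Import structures.
From mathcomp Require Import all_boot all_order all_algebra.
From mathcomp Require Import all_classical all_reals all_analysis.
From mathcomp Require Import finmap.
From mathcomp.algebra_tactics Require Import ring lra.
Set Implicit Arguments. Unset Strict Implicit. Unset Printing Implicit Defensive.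
Import Order.TTheory GRing.Theory Num.Theory.
Import numFieldNormedType.Exports.
Local Open Scope classical_set_scope.
Local Open Scope ring_scope.

Section Basics.
Variables (R : realType) (d : nat).
Notation V := 'rV[R]_d.
Implicit Types (u v w : V).

Lemma dotvC u v : dotv u v = dotv v u.
Proof. by apply: eq_bigr => k _; rewrite mulrC. Qed.

Lemma dotvDl u v w : dotv (u + v) w = dotv u w + dotv v w.
Proof. by rewrite /dotv -big_split; apply: eq_bigr => k _; rewrite !mxE mulrDl. Qed.

Lemma dotvZl (a : R) u v : dotv (a *: u) v = a * dotv u v.
Proof. by rewrite /dotv mulr_sumr; apply: eq_bigr => k _; rewrite !mxE mulrA. Qed.

Lemma dotvNl u v : dotv (- u) v = - dotv u v.
Proof. by rewrite -scaleN1r dotvZl mulN1r. Qed.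

Lemma dotvBl u v w : dotv (u - v) w = dotv u w - dotv v w.
Proof. by rewrite dotvDl dotvNl. Qed.

Lemma dotvDr u v w : dotv w (u + v) = dotv w u + dotv w v.
Proof. by rewrite !(dotvC w) dotvDl. Qed.
Lemma dotvZr (a : R) u v : dotv v (a *: u) = a * dotv v u.
Proof. by rewrite !(dotvC v) dotvZl. Qed.
Lemma dotvBr u v w : dotv w (u - v) = dotv w u - dotv w v.
Proof. by rewrite !(dotvC w) dotvBl. Qed.
Lemma dotv0l u : dotv 0 u = 0.
Proof. by rewrite /dotv big1 // => k _; rewrite mxE mul0r. Qed.
Lemma dotv0r u : dotv u 0 = 0.
Proof. by rewrite dotvC dotv0l. Qed.

Lemma dotv_ge0 u : 0 <= dotv u u.
Proof. by apply: sumr_ge0 => k _; rewrite -expr2 sqr_ge0. Qed.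

Lemma enorm_ge0 u : 0 <= enorm u.
Proof. exact: sqrtr_ge0. Qed.

Lemma enorm_sq u : enorm u ^+ 2 = dotv u u.
Proof. by rewrite /enorm sqr_sqrtr // dotv_ge0. Qed.

Lemma dotv_eq0 u : dotv u u = 0 -> u = 0.
Proof.
move=> h; apply/rowP => k; rewrite mxE.
have h' : \sum_(i < d) u ord0 i ^+ 2 = 0.
  by rewrite -[RHS]h /dotv; apply: eq_bigr => i _; rewrite expr2.
have := @psumr_eq0P _ _ xpredT _ (fun k _ => sqr_ge0 (u ord0 k)) h' k isT.
by move/eqP; rewrite sqrf_eq0 => /eqP.
Qed.

Lemma enorm_eq0 u : enorm u = 0 -> u = 0.
Proof. by move=> h; apply: dotv_eq0; rewrite -enorm_sq h expr0n. Qed.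

Lemma enorm0 : enorm (0 : V) = 0.
Proof. by rewrite /enorm dotv0l sqrtr0. Qed.

Lemma enormZ (a : R) u : enorm (a *: u) = `|a| * enorm u.
Proof.
by rewrite /enorm dotvZl dotvZr mulrA -expr2 sqrtrM ?sqr_ge0 // sqrtr_sqr.
Qed.

Lemma enormN u : enorm (- u) = enorm u.
Proof. by rewrite -scaleN1r enormZ normrN1 mul1r. Qed.

Lemma enormB u v : enorm (u - v) = enorm (v - u).
Proof. by rewrite -enormN opprB. Qed.

Lemma CS_sq u v : dotv u v ^+ 2 <= dotv u u * dotv v v.
Proof.
have [u0|] := eqVneq (dotv u u) 0.
  by rewrite (dotv_eq0 u0) !dotv0l expr0n mul0r.
move=> /negbTE Hn; have A0 : 0 < dotv u u by rewrite lt_def Hn dotv_ge0.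
set A := dotv u u; set B := dotv u v; set C := dotv v v.
have := dotv_ge0 ((B / A) *: u - v).
rewrite dotvBl !dotvBr !dotvZl !dotvZr -/A -/B -/C (dotvC v u) -/B.
move=> h.
have h2 : 0 <= A * (B / A * (B / A * A) - B / A * B - (B / A * B - C)).
  by apply: mulr_ge0 => //; apply: ltW.
have E : A * (B / A * (B / A * A) - B / A * B - (B / A * B - C)) = A * C - B ^+ 2.
  by field; rewrite gt_eqF.
by rewrite E subr_ge0 in h2.
Qed.

Lemma CS u v : `|dotv u v| <= enorm u * enorm v.
Proof.
rewrite /enorm -sqrtrM ?dotv_ge0 // -(sqrtr_sqr (dotv u v)) ler_sqrt //.
  exact: CS_sq.
by apply: mulr_ge0; apply: dotv_ge0.
Qed.

Lemma coord_le_enorm u k : `|u ord0 k| <= enorm u.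
Proof.
rewrite -sqrtr_sqr ler_sqrt ?dotv_ge0 // /dotv (bigD1 k) //= -expr2 lerDl.
by apply: sumr_ge0 => i _; rewrite -expr2 sqr_ge0.
Qed.

Lemma mxnorm_le_enorm u : `|u| <= enorm u.
Proof.
rewrite (_ : `|u| = mx_norm u) // mx_normrE; apply/bigmax_leP; split; first exact: enorm_ge0.
by move=> [i k] _ /=; rewrite (ord1 i); exact: coord_le_enorm.
Qed.

Lemma coord_le_mxnorm u k : `|u ord0 k| <= `|u|.
Proof.
rewrite (_ : `|u| = mx_norm u) // mx_normrE; apply/bigmax_geP; right.
by exists (ord0, k).
Qed.

Lemma enorm_le_sum u : enorm u <= \sum_k `|u ord0 k|.
Proof.
have S0 : 0 <= \sum_k `|u ord0 k| by apply: sumr_ge0.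
rewrite -(ger0_norm S0) -sqrtr_sqr ler_sqrt ?sqr_ge0 //.
rewrite expr2 mulr_sumr /dotv; apply: ler_sum => i _.
have e : u ord0 i * u ord0 i = `|u ord0 i| * `|u ord0 i|.
  by rewrite -normrM -expr2 ger0_norm // sqr_ge0.
rewrite (bigD1 i) //= e mulrDl lerDl; apply: mulr_ge0 => //.
by apply: sumr_ge0.
Qed.

Lemma enorm_le_mxnorm u : enorm u <= d%:R * `|u|.
Proof.
apply: (le_trans (enorm_le_sum u)).
have -> : d%:R * `|u| = \sum_(k < d) `|u| by rewrite sumr_const card_ord mulr_natl.
apply: ler_sum => k _.
exact: coord_le_mxnorm.
Qed.

End Basics.

Section Sim.
Variables (R : realType) (d : nat).
Notation V := 'rV[R]_d.
Implicit Types (u v w x y : V).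

Definition simil (f : V -> V) (r : R) := forall x y, enorm (f x - f y) = r * enorm (x - y).

Lemma dotv_sumr w (F : 'I_d -> V) : dotv w (\sum_k F k) = \sum_k dotv w (F k).
Proof.
rewrite /dotv; under eq_bigr do rewrite summxE mulr_sumr.
by rewrite exchange_big.
Qed.

Lemma dotv_suml w (F : 'I_d -> V) : dotv (\sum_k F k) w = \sum_k dotv (F k) w.
Proof. by rewrite dotvC dotv_sumr; apply: eq_bigr => k _; rewrite dotvC. Qed.

Lemma dotv_delta k x : dotv 'e_k x = x ord0 k.
Proof.
rewrite /dotv (bigD1 k) //= big1 => [|j jk]; first by rewrite !mxE eqxx /= mul1r addr0.
by rewrite !mxE (negbTE jk) andbF mul0r.
Qed.

Lemma dotv_expand u v : dotv (u - v) (u - v) = dotv u u - 2 * dotv u v + dotv v v.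
Proof. rewrite dotvBl !dotvBr (dotvC v u); ring. Qed.

Lemma isom_dot (h : V -> V) : h 0 = 0 -> (forall x y, enorm (h x - h y) = enorm (x - y)) ->
  forall x y, dotv (h x) (h y) = dotv x y.
Proof.
move=> h0 hi x y.
have nx : dotv (h x) (h x) = dotv x x by rewrite -!enorm_sq -(subr0 (h x)) -h0 hi subr0.
have ny : dotv (h y) (h y) = dotv y y by rewrite -!enorm_sq -(subr0 (h y)) -h0 hi subr0.
have nxy : dotv (h x - h y) (h x - h y) = dotv (x - y) (x - y) by rewrite -!enorm_sq hi.
rewrite !dotv_expand nx ny in nxy.
lra.
Qed.

Lemma sim_affine f r : 0 < r -> simil f r ->
  exists M : 'M[R]_d, M *m M^T = 1%:M /\ forall x, f x = f 0 + r *: (x *m M).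
Proof.
move=> r0 hf.
pose g x := r^-1 *: (f x - f 0).
have g0 : g 0 = 0 by rewrite /g subrr scaler0.
have gi x y : enorm (g x - g y) = enorm (x - y).
  rewrite /g -scalerBr opprB addrA subrK enormZ hf mulrA ger0_norm ?invr_ge0 ?ltW //.
  by rewrite mulVf ?gt_eqF // mul1r.
have gd := isom_dot g0 gi.
pose M := \matrix_(k, j) g 'e_k ord0 j.
have rowM k : row k M = g 'e_k by apply/rowP => j; rewrite !mxE.
have ee k l : dotv (g 'e_k) (g 'e_l) = (k == l)%:R.
  by rewrite gd dotv_delta !mxE eqxx /= eq_sym.
have xM x w : dotv (x *m M) w = \sum_k x ord0 k * dotv (g 'e_k) w.
  rewrite mulmx_sum_row dotv_suml; apply: eq_bigr => k _.
  by rewrite rowM dotvZl.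
have gxe x k : dotv (g 'e_k) (g x) = x ord0 k by rewrite gd dotv_delta.
have gxM x k : dotv (g 'e_k) (x *m M) = x ord0 k.
  rewrite dotvC xM.
  transitivity (dotv 'e_k x); last by rewrite dotv_delta.
  rewrite [in RHS](row_sum_delta x) dotv_sumr; apply: eq_bigr => l _.
  by rewrite dotvZr ee dotvC dotv_delta !mxE eqxx /= eq_sym.
have lin x : g x = x *m M.
  apply/subr0_eq/dotv_eq0.
  rewrite dotv_expand (dotvC (g x)) !xM.
  under eq_bigr do rewrite gxe.
  under [X in _ + X]eq_bigr do rewrite gxM.
  rewrite gd /dotv; ring.
exists M; split.
  apply/matrixP => k l; rewrite !mxE.
  rewrite -(ee k l) /dotv; apply: eq_bigr => j _; rewrite !mxE.
  by [].
move=> x; rewrite -lin /g scalerA mulfV ?gt_eqF // scale1r.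
by rewrite addrC subrK.
Qed.

Lemma dotv_mx u v : dotv u v = (u *m v^T) ord0 ord0.
Proof. by rewrite /dotv !mxE; apply: eq_bigr => k _; rewrite mxE. Qed.

Lemma sim_dot f r : 0 < r -> simil f r -> forall a : V,
  exists2 a' : V, enorm a' = enorm a & forall x, dotv a (f x) = dotv a (f 0) + r * dotv a' x.
Proof.
move=> r0 hf a.
have [M [MM fM]] := sim_affine r0 hf.
have MM' : M^T *m M = 1%:M := mulmx1C MM.
exists (a *m M^T).
  rewrite /enorm; congr Num.sqrt; rewrite !dotv_mx trmx_mul trmxK.
  by rewrite mulmxA -(mulmxA a) MM' mulmx1.
move=> x; rewrite fM dotvDr dotvZr; congr (_ + _ * _).
by rewrite !dotv_mx trmx_mul mulmxA.
Qed.

End Sim.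

Section Width.
Variables (R : realType) (d : nat).
Notation V := 'rV[R]_d.
Implicit Types (u v w x y : V).

Lemma dotv_lip u v w : `|dotv u w - dotv v w| <= d%:R * enorm w * `|u - v|.
Proof.
rewrite -dotvBl; have := enorm_le_mxnorm (u - v); have := enorm_ge0 w.
have := CS (u - v) w; nra.
Qed.

Lemma dotv_norm_cont w : continuous (fun a : V => `|dotv a w|).
Proof.
move=> a; apply/(@cvgrPdist_lt _ _ _ (nbhs a) (nbhs_filter a)) => e e0.
apply/nbhs_ballP; exists (e / (d%:R * enorm w + 1)) => /=.
  by rewrite divr_gt0 // ltr_wpDl ?mulr_ge0 ?enorm_ge0.
move=> b /= hb.
have hb' : `|a - b| < e / (d%:R * enorm w + 1) by rewrite -ball_normE /= in hb.
have p : 0 < d%:R * enorm w + 1 by rewrite ltr_wpDl ?mulr_ge0 ?enorm_ge0.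
rewrite ltr_pdivlMr // in hb'.
apply: (le_lt_trans (ler_dist_dist _ _)).
apply: (le_lt_trans (dotv_lip _ _ _)).
have := normr_ge0 (a - b); have : 0 <= d%:R * enorm w by rewrite mulr_ge0 ?enorm_ge0.
nra.
Qed.

Lemma open_dotv w (eta : R) : open [set a : V | eta < `|dotv a w|].
Proof.
apply: (@open_comp _ _ (fun a : V => `|dotv a w|) [set x | eta < x]).
  by move=> x _; apply: dotv_norm_cont.
exact: open_gt.
Qed.

Lemma pos_lb (T : eqType) (s : seq T) (g : T -> R) :
  (forall i, i \in s -> 0 < g i) -> exists2 de, 0 < de & forall i, i \in s -> de <= g i.
Proof.
elim: s => [|a s IH] h; first by exists 1.
have [de de0 hde] := IH (fun i hi => h i (mem_behead (s := a :: s) hi)).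
exists (Num.min de (g a)); first by rewrite lt_min de0 h // mem_head.
move=> i; rewrite in_cons => /orP[/eqP ->|hi]; first by rewrite ge_min lexx orbT.
by rewrite ge_min hde.
Qed.

Lemma width (K : set V) : compact K -> K !=set0 ->
  ~ (exists L, is_hyperplane L /\ K `<=` L) ->
  exists2 de : R, 0 < de & forall (a : V) (b : R), a != 0 ->
    exists2 x, K x & de * enorm a <= `|dotv a x - b|.
Proof.
move=> cK [p Kp] nL.
pose S := [set a : V | `|a| = 1].
have cS : compact S.
  apply: bounded_closed_compact.
    rewrite /= /bounded_near; apply: filterS (nbhs_pinfty_ge (r := 1) _) => //.
    by move=> M M1 x Sx /=; rewrite Sx.
  have := (continuous_closedP (fun a : V => `|a|)).1 (@norm_continuous _ _) _ (closed_eq (y := 1)).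
  by [].
pose D := [set q : V * R | K q.1 /\ 0 < q.2].
pose F := fun q : V * R => [set a : V | q.2 < `|dotv a (q.1 - p)|].
have cov : S `<=` cover D F.
  move=> a Sa.
  have a0 : a != 0 by apply/eqP => a0; move: Sa; rewrite /S /= a0 normr0 => /eqP; rewrite eq_sym oner_eq0.
  have [x Kx hx] : exists2 x, K x & dotv a x != dotv a p.
    apply: contrapT => hn; apply: nL.
    exists [set x | dotv a x = dotv a p]; split; first by exists a, (dotv a p).
    move=> x Kx /=; apply: contrapT => hne; apply: hn; exists x => //; exact/eqP.
  exists (x, `|dotv a (x - p)| / 2).
    split => //=; rewrite divr_gt0 // normr_gt0 dotvBr subr_eq0 //.
  rewrite /F /= ltr_pdivrMr // ltr_pMr ?normr_gt0 ?dotvBr ?subr_eq0 //.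
  by rewrite ltr1n.
have cS' : cover_compact S by rewrite -compact_cover.
have hop : forall q, D q -> open (F q) by move=> q _; exact: open_dotv.
have [D' D'D hD'] := cS' _ D F hop cov.
have D'D2 : forall i, i \in D' -> D i by move=> i /D'D /set_mem.
have [de0 de00 hde0] := @pos_lb _ (enum_fset D') snd (fun i hi => (D'D2 i hi).2).
exists (de0 / 2 / (d%:R + 1)).
  by rewrite !divr_gt0 // ltr_wpDl.
move=> a b a0.
have na : 0 < `|a| by rewrite normr_gt0.
pose a1 := `|a|^-1 *: a.
have Sa1 : S a1 by rewrite /S /= normrZ normrV ?unitfE ?gt_eqF // normr_id mulVf ?gt_eqF.
have [[x eta] /= hq Fx] := hD' a1 Sa1.
have [Kx _] := D'D2 _ hq.
have le1 : de0 < `|dotv a1 (x - p)|.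
  by apply: le_lt_trans (hde0 _ hq) Fx.
have key : de0 / 2 * `|a| <= `|dotv a x - b| \/ de0 / 2 * `|a| <= `|dotv a p - b|.
  have e1 : dotv a1 (x - p) = `|a|^-1 * ((dotv a x - b) - (dotv a p - b)).
    by rewrite /a1 dotvZl dotvBr; congr (_ * _); ring.
  rewrite e1 normrM normrV ?unitfE ?gt_eqF // normr_id in le1.
  rewrite mulrC ltr_pdivlMr // in le1.
  have tri := ler_normB (dotv a x - b) (dotv a p - b).
  case: (leP (de0 / 2 * `|a|) `|dotv a x - b|) => h1; [by left | right; lra].
have ena : enorm a <= (d%:R + 1) * `|a|.
  apply: le_trans (enorm_le_mxnorm a) _.
  by rewrite ler_wpM2r ?normr_ge0 // lerDl.
have fin : de0 / 2 / (d%:R + 1) * enorm a <= de0 / 2 * `|a|.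
  have dp : 0 < d%:R + 1 :> R by rewrite ltr_wpDl.
  apply: le_trans (ler_wpM2l _ ena) _; first by rewrite !divr_ge0 ?ltW.
  rewrite le_eqVlt; apply/orP; left; apply/eqP; field; by rewrite gt_eqF.
case: key => h; [exists x | exists p] => //; exact: le_trans fin h.
Qed.

End Width.

Section Unique.
Variables (R : realType) (d : nat).
Notation V := 'rV[R]_d.

Lemma geom_small (s C e : R) : 0 <= s -> s < 1 -> 0 < e -> 0 <= C ->
  exists m : nat, s ^+ m * C < e.
Proof.
move=> s0 s1 e0 C0.
have hs : `|s| < 1 by rewrite ger0_norm.
have pC : 0 < C + 1 by rewrite ltr_wpDl.
have := (cvgrPdist_lt _ _).1 (cvg_expr hs) (e / (C + 1)) (divr_gt0 e0 pC).
move=> [N _ hN]; exists N.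
have := hN N (leqnn N); rewrite /= sub0r normrN ger0_norm ?exprn_ge0 //.
rewrite ltr_pdivlMr // => h.
apply: le_lt_trans h; rewrite ler_wpM2l ?exprn_ge0 //.
by rewrite lerDl.
Qed.

Lemma closed_enorm (K2 : set V) x : closed K2 ->
  (forall e, 0 < e -> exists2 z, K2 z & enorm (x - z) < e) -> K2 x.
Proof.
move=> cl h; apply: cl => B /nbhs_ballP [e e0 sB].
have [z Kz hz] := h e e0.
exists z; split => //; apply: sB.
rewrite -ball_normE /=.
exact: le_lt_trans (mxnorm_le_enorm _) hz.
Qed.

Lemma mxbound (K : set V) : compact K -> exists M : R, 0 <= M /\ forall x, K x -> `|x| <= M.
Proof.
move=> /compact_bounded [M [Mr HM]].
exists (`|M| + 1); split; first by rewrite addr_ge0.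
move=> x Kx; apply: (HM (`|M| + 1)) => //.
by rewrite (le_lt_trans (real_ler_norm Mr)) // ltrDl.
Qed.

Lemma enorm_bound (K : set V) : compact K -> exists C : R, 0 <= C /\
  forall x y, K x -> K y -> enorm (x - y) <= C.
Proof.
move=> /mxbound [M [M0 HM]].
exists (d%:R * (M + M)); split; first by rewrite mulr_ge0 ?addr_ge0.
move=> x y Kx Ky; apply: le_trans (enorm_le_mxnorm _) _.
rewrite ler_wpM2l // (le_trans (ler_normB _ _)) // lerD //; exact: HM.
Qed.

Lemma attr_sub (J : Type) (A : set J) (f : J -> V -> V) (s : R) (K1 K2 : set V) :
  0 <= s -> s < 1 ->
  (forall j, A j -> forall x y, enorm (f j x - f j y) <= s * enorm (x - y)) ->
  is_attractor A f K1 -> is_attractor A f K2 -> K1 `<=` K2.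
Proof.
move=> s0 s1 hf [cK1 [_ eK1]] [cK2 [[y0 Ky0] eK2]].
have step : forall m x, K1 x -> exists h : V -> V,
    [/\ exists2 y, K1 y & x = h y, (forall z, K2 z -> K2 (h z))
      & forall u v, enorm (h u - h v) <= s ^+ m * enorm (u - v)].
  elim => [|m IH] x Kx.
    exists id; split => //; first by exists x.
    by move=> u v; rewrite expr0 mul1r.
  have : (\bigcup_(j in A) (f j @` K1)) x by rewrite -eK1.
  move=> [j Aj [x' Kx' <-]].
  have [h [[y Ky ->] hK2 hl]] := IH x' Kx'.
  exists (f j \o h); split.
  - by exists y.
  - move=> z Kz /=; rewrite eK2; exists j => //; exists (h z) => //; exact: hK2.
  - move=> u v /=; apply: le_trans (hf j Aj _ _) _.
    by rewrite exprS -mulrA ler_wpM2l.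
have [M [M0 hM]] := mxbound cK1.
pose C := d%:R * (M + `|y0|).
have C0 : 0 <= C by rewrite mulr_ge0 ?addr_ge0.
move=> x Kx; apply: closed_enorm; first exact: compact_closed (@norm_hausdorff _ _) cK2.
move=> e e0.
have [m hm] := geom_small s0 s1 e0 C0.
have [h [[y Ky ->] hK2 hl]] := step m x Kx.
exists (h y0); first exact: hK2.
apply: le_lt_trans (hl _ _) _.
apply: le_lt_trans hm.
rewrite ler_wpM2l ?exprn_ge0 //.
apply: le_trans (enorm_le_mxnorm _) _.
rewrite ler_wpM2l // (le_trans (ler_normB _ _)) // lerD //; exact: hM.
Qed.

End Unique.

Lemma mkseqSl (T : Type) (f : nat -> T) n : mkseq f n.+1 = f 0%N :: mkseq (fun k => f k.+1) n.
Proof. by rewrite /mkseq /= (iotaDl 1 0) -map_comp. Qed.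

Section Main.
Variables (R : realType) (d : nat) (I : finType).
Notation V := 'rV[R]_d.
Variables (phi : I -> V -> V) (K : set V) (rr : I -> R).
Hypothesis hrr : forall i, 0 < rr i /\ rr i < 1 /\ simil (phi i) (rr i).
Hypothesis hK : is_attractor [set: I] phi K.

Definition wr (w : seq I) : R := foldr (fun i acc => rr i * acc) 1 w.

Lemma wr_pos w : 0 < wr w.
Proof. elim: w => [|i w IH] /=; [exact: ltr01 | exact: mulr_gt0 (hrr i).1 IH]. Qed.

Lemma word_simil w : simil (word_map phi w) (wr w).
Proof.
elim: w => [|i w IH] x y /=; first by rewrite mul1r.
by have [_ [_ ->]] := hrr i; rewrite IH mulrA.
Qed.

Lemma phiK i x : K x -> K (phi i x).
Proof.
move=> Kx; have [_ [_ eK]] := hK; rewrite eK.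
by exists i => //; exists x.
Qed.

Lemma wordK w x : K x -> K (word_map phi w x).
Proof. by elim: w => [|i w IH] //= Kx; apply: phiK; apply: IH. Qed.

Lemma K_dec x : K x -> exists i, exists2 y, K y & x = phi i y.
Proof.
move=> Kx; have [_ [_ eK]] := hK; move: Kx; rewrite {1}eK.
by move=> [i _ [y Ky <-]]; exists i; exists y.
Qed.

Lemma cover_n n x : K x -> exists w, size w = n /\ exists2 y, K y & x = word_map phi w y.
Proof.
elim: n x => [|n IH] x Kx; first by exists [::]; split => //; exists x.
have [i [y Ky ->]] := K_dec Kx.
have [w [sw [z Kz ->]]] := IH y Ky.
by exists (i :: w); split; [rewrite /= sw | exists z].
Qed.

Lemma rmax : exists2 s, 0 <= s /\ s < 1 & forall i, rr i <= s.
Proof.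
suff [s [s0 s1] hs] : exists2 s, 0 <= s /\ s < 1 & forall i, i \in enum I -> rr i <= s.
  by exists s => // i; apply: hs; rewrite mem_enum.
elim: (enum I) => [|a l [s [s0 s1] hs]]; first by exists 0; first by split; [|exact: ltr01].
exists (Num.max s (rr a)).
  by split; [rewrite le_max s0 | rewrite gt_max s1 (hrr a).2.1].
move=> i; rewrite in_cons => /orP[/eqP ->|hi]; first by rewrite le_max lexx orbT.
by rewrite le_max hs.
Qed.

Lemma rmin : exists2 m, 0 < m & forall i, m <= rr i.
Proof.
have [m m0 hm] := @pos_lb R _ (enum I) rr (fun i _ => (hrr i).1).
by exists m => // i; apply: hm; rewrite mem_enum.
Qed.

Lemma wr_le s : 0 <= s -> (forall i, rr i <= s) -> forall w, wr w <= s ^+ size w.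
Proof.
move=> s0 hs; elim => [|i w IH] /=; first by rewrite expr0.
rewrite exprS; apply: ler_pM => //; [exact: ltW (hrr i).1 | exact: ltW (wr_pos w)].
Qed.

Lemma good_word m0 : 0 < m0 -> (forall i, m0 <= rr i) -> forall t, 0 < t -> t <= 1 ->
  forall x, K x -> exists v, (exists2 y, K y & x = word_map phi v y) /\ m0 * t <= wr v /\ wr v <= t.
Proof.
move=> m00 hm0 t t0 t1.
have [s [s0 s1] hs] := rmax.
have [n hn] := geom_small s0 s1 t0 ler01.
rewrite mulr1 in hn.
elim: n t t0 t1 hn => [|n IH] t t0 t1 hn x Kx.
  by move: hn; rewrite expr0 => /(lt_le_trans)/(_ t1); rewrite ltxx.
have [i [y Ky ->]] := K_dec Kx.
have [ri0 [ri1 _]] := hrr i.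
case: (leP (rr i) t) => hit.
  exists [:: i]; split; first by exists y.
  rewrite /= mulr1; split => //.
  apply: le_trans (hm0 i); rewrite ger_pMr //.
have t'0 : 0 < t / rr i by rewrite divr_gt0.
have t'1 : t / rr i <= 1 by rewrite ler_pdivrMr // mul1r ltW.
have hn' : s ^+ n < t / rr i.
  rewrite ltr_pdivlMr //; apply: le_lt_trans hn.
  by rewrite exprS [s * _]mulrC ler_wpM2l ?exprn_ge0 ?hs.
have [v [[z Kz ->] [h1 h2]]] := IH _ t'0 t'1 hn' y Ky.
exists (i :: v); split; first by exists z.
rewrite /=; split.
  have e : m0 * t = m0 * (t / rr i) * rr i by field; rewrite gt_eqF.
  by rewrite e mulrC ler_wpM2l // ltW.
by rewrite ler_pdivlMr // in h2; rewrite mulrC.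
Qed.


Lemma address x : K x -> exists j : nat -> I, forall n, exists2 y, K y & x = word_map phi (mkseq j n) y.
Proof.
move=> Kx.
have [i0 _] := K_dec Kx.
have hF : forall z, exists p : I * V, K z -> K p.2 /\ z = phi p.1 p.2.
  move=> z; case: (pselect (K z)) => Kz.
    by have [i [y Ky ->]] := K_dec Kz; exists (i, y).
  by exists (i0, z).
have [F hF'] := choice hF.
pose xs n := iter n (fun z => (F z).2) x.
pose j n := (F (xs n)).1.
have Kxs : forall m, K (xs m) by elim => [|m IH] //=; exact: (hF' _ IH).1.
have key : forall n m, xs m = word_map phi (mkseq (fun k => j (k + m)%N) n) (xs (n + m)%N).
  elim => [|n IH] m; first by [].
  rewrite mkseqSl /=.
  have e : mkseq (fun k => j (k.+1 + m)%N) n = mkseq (fun k => j (k + m.+1)%N) n.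
    by apply: eq_mkseq => k; rewrite addSnnS.
  rewrite e add0n.
  have -> : (F (xs (n + m)%N)).2 = xs (n + m.+1)%N by rewrite addnS.
  rewrite -IH.
  exact: (hF' _ (Kxs m)).2.
exists j => n; exists (xs n) => //.
rewrite -[in RHS](eq_mkseq (f := fun k => j (k + 0)%N)); last by move=> k; rewrite addn0.
by have := key n 0%N; rewrite addn0.
Qed.

Lemma section_attr Pi : is_section Pi -> is_attractor [set w | w \in Pi] (word_map phi) K.
Proof.
move=> [_ _ cov]; have [cK [K0 _]] := hK; split => //; split => //.
apply/seteqP; split.
  move=> x Kx; have [j hj] := address Kx; have [u uPi hu] := cov j.
  have [y Ky ex] := hj (size u); exists u => //; exists y => //.
  by rewrite ex hu.
by move=> x [w _ [y Ky <-]]; exact: wordK.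
Qed.

Lemma h31 : hyperplane_diffuse K -> ~ (exists L, is_hyperplane L /\ K `<=` L).
Proof.
move=> [_ [be [xi0 [be0 [xi00 H]]]]] [L [hL KL]].
have [_ [[x Kx] _]] := hK.
have h1 : 0 < xi0 / 2 by rewrite divr_gt0.
have h2 : xi0 / 2 < xi0 by rewrite ltr_pdivrMr // ltr_pMr // ltr1n.
have [y [Ky _ hy]] := H (xi0 / 2) h1 h2 x Kx L hL.
apply: hy; exists y; first exact: KL.
by rewrite subrr enorm0 mulr_gt0.
Qed.

Lemma h21 : (exists Pi : seq (seq I), is_section Pi /\
        diffuse [set w | w \in Pi] (word_map phi)) -> ~ (exists L, is_hyperplane L /\ K `<=` L).
Proof.
move=> [Pi [sPi [c c0 hd]]] [L [hL KL]].
have [w /= wPi hw] := hd K (section_attr sPi) L hL.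
have [_ [[x Kx] _]] := hK.
have : (word_map phi w @` K `&` open_nbhd L c) (word_map phi w x).
  split; first by exists x.
  exists (word_map phi w x); first exact/KL/wordK.
  by rewrite subrr enorm0.
by rewrite hw.
Qed.

Lemma h13 : ~ (exists L, is_hyperplane L /\ K `<=` L) -> hyperplane_diffuse K.
Proof.
move=> nL.
have [cK [K0 _]] := hK.
have [de de0 hde] := width cK K0 nL.
have [C [C0 hC]] := enorm_bound cK.
have [m0 m00 hm0] := rmin.
have Cp : 0 < C + 1 by rewrite ltr_wpDl.
split; first exact: compact_closed (@norm_hausdorff _ _) cK.
exists (m0 * de / (C + 1)), (C + 1); split; [|split].
- by rewrite divr_gt0 ?mulr_gt0.
- by [].
move=> xi xi0 xi1 x Kx L [a [b [a0 ->]]].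
pose t := xi / (C + 1).
have t0 : 0 < t by rewrite divr_gt0.
have t1 : t <= 1 by rewrite ler_pdivrMr // mul1r ltW.
have [v [[y Ky ->] [h1 h2]]] := good_word m00 hm0 t0 t1 Kx.
pose rho := wr v.
have rho0 : 0 < rho := wr_pos v.
have [a' ea' fa'] := sim_dot rho0 (word_simil v) a.
have ena : 0 < enorm a.
  rewrite lt_def enorm_ge0 andbT; apply/eqP => h; move/eqP: a0; apply; exact: enorm_eq0.
have a'0 : a' != 0.
  apply/eqP => h; rewrite h enorm0 in ea'; move: ena; rewrite -ea' ltxx.
  by [].
set f := word_map phi v.
have [k Kk hk] := hde a' ((b - dotv a (f 0)) / rho) a'0.
exists (f k); split.
- exact: wordK.
- rewrite (word_simil v) -/rho.
  have et : t * (C + 1) = xi by rewrite /t; field; rewrite gt_eqF.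
  rewrite -et; apply: (le_lt_trans (ler_wpM2l (ltW rho0) (hC k y Kk Ky))).
  apply: (le_lt_trans (ler_wpM2r C0 h2)).
  by rewrite ltr_pM2l // ltrDl.
- move=> [z /= hz hyz].
  have key : dotv a (f k) - b = rho * (dotv a' k - (b - dotv a (f 0)) / rho).
    by rewrite fa'; field; rewrite gt_eqF.
  have up : `|dotv a (f k) - b| < enorm a * (m0 * de / (C + 1) * xi).
    rewrite -hz -dotvBr; apply: le_lt_trans (CS _ _) _.
    by rewrite ltr_pM2l.
  have lo : rho * (de * enorm a) <= `|dotv a (f k) - b|.
    by rewrite key normrM (ger0_norm (ltW rho0)) ler_wpM2l ?(ltW rho0) // -ea'.
  have e2 : m0 * de / (C + 1) * xi = m0 * t * de by rewrite /t; field; rewrite gt_eqF.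
  rewrite e2 in up.
  have H : m0 * t * de * enorm a <= rho * (de * enorm a).
    by rewrite mulrA (ler_wpM2r (enorm_ge0 a)) // (ler_wpM2r (ltW de0)).
  have H' : enorm a * (m0 * t * de) <= `|dotv a (f k) - b|.
    by rewrite mulrC; apply: le_trans lo.
  by move: (lt_le_trans up H'); rewrite ltxx.
Qed.

Lemma h12 : ~ (exists L, is_hyperplane L /\ K `<=` L) ->
  exists Pi : seq (seq I), is_section Pi /\ diffuse [set w | w \in Pi] (word_map phi).
Proof.
move=> nL.
have [cK [K0 eK]] := hK.
have [de de0 hde] := width cK K0 nL.
have [C [C0 hC]] := enorm_bound cK.
have [s [s0 s1] hs] := rmax.
have de2 : 0 < de / 2 by rewrite divr_gt0.
have [n hn] := geom_small s0 s1 de2 C0.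
pose N := n.+1.
pose Pi := [seq val t | t <- enum {: N.-tuple I}].
have memPi w : (w \in Pi) = (size w == N).
  apply/mapP/eqP => [[t _ ->]|hw]; first exact: size_tuple.
  by exists (Tuple (introT eqP hw)) => //; rewrite mem_enum.
have sN0 : 0 <= s ^+ N by rewrite exprn_ge0.
have sN1 : s ^+ N < 1 by rewrite exprn_ilt1.
have sNn : s ^+ N <= s ^+ n by rewrite exprS; apply: ler_piMl; [exact: exprn_ge0 | exact: ltW].
exists Pi; split.
  split.
  - by rewrite map_inj_uniq ?enum_uniq //; exact: val_inj.
  - move=> u v; rewrite !memPi => /eqP su /eqP sv /eqP uv.
    apply/seteqP; split => // j [/= hu hv]; apply: uv.
    by rewrite -hu -hv su sv.
  - by move=> j; exists (mkseq j N); [rewrite memPi size_mkseq | exact: (congr1 (mkseq j) (size_mkseq j N))].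
exists (de / 2) => // K' hK' L [a [b [a0 ->]]].
have hf : forall w, [set w | w \in Pi] w -> forall x y,
    enorm (word_map phi w x - word_map phi w y) <= s ^+ N * enorm (x - y).
  move=> w /=; rewrite memPi => /eqP sw x y.
  rewrite word_simil -sw ler_wpM2r ?enorm_ge0 //; exact: wr_le.
have hKattr : is_attractor [set w | w \in Pi] (word_map phi) K.
  split => //; split => //; apply/seteqP; split.
    move=> x Kx; have [w [sw [y Ky ->]]] := cover_n N Kx.
    by exists w; [rewrite /= memPi sw | exists y].
  by move=> x [w _ [y Ky <-]]; exact: wordK.
have eKK : K' = K.
  by apply/seteqP; split; apply: (attr_sub sN0 sN1 hf).
rewrite eKK.
have [x Kx hx] := hde a b a0.
have [w [sw [y Ky ex]]] := cover_n N Kx.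
exists w; first by rewrite /= memPi sw.
apply/seteqP; split => // z [[k Kk <-] [u /= hu hku]].
have ena : 0 < enorm a.
  rewrite lt_def enorm_ge0 andbT; apply/eqP => h; move/eqP: a0; apply; exact: enorm_eq0.
have d1 : enorm (word_map phi w y - word_map phi w k) < de / 2.
  rewrite word_simil; apply: le_lt_trans hn.
  apply: le_trans (ler_pM _ _ (wr_le s0 hs w) (hC y k Ky Kk)) _ => //.
  - exact: ltW (wr_pos w).
  - exact: enorm_ge0.
  by rewrite sw ler_wpM2r.
have eq1 : dotv a x - b = dotv a (word_map phi w y - word_map phi w k) + dotv a (word_map phi w k - u).
  by rewrite !dotvBr hu ex; ring.
have c1 := CS a (word_map phi w y - word_map phi w k).
have c2 := CS a (word_map phi w k - u).
have t1 := ler_normD (dotv a (word_map phi w y - word_map phi w k)) (dotv a (word_map phi w k - u)).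
rewrite -eq1 in t1.
have : enorm a * enorm (word_map phi w y - word_map phi w k) < enorm a * (de / 2) by rewrite ltr_pM2l.
have : enorm a * enorm (word_map phi w k - u) < enorm a * (de / 2) by rewrite ltr_pM2l.
lra.
Qed.

End Main.

Theorem theorem3p12 (R : realType) (d : nat) (I : finType)
  (phi : I -> 'rV[R]_d -> 'rV[R]_d) (K : set 'rV[R]_d)
  (hphi : forall i, contracting_similarity (phi i))
  (hK : is_attractor [set: I] phi K) :
  ((~ exists L, is_hyperplane L /\ K `<=` L) <->
     (exists Pi : seq (seq I), is_section Pi /\
        diffuse [set w | w \in Pi] (word_map phi))) /\
  ((exists Pi : seq (seq I), is_section Pi /\
        diffuse [set w | w \in Pi] (word_map phi)) <->
     hyperplane_diffuse K).
Proof.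
have [rr hrr] := choice hphi.
have H12 := h12 hrr hK; have H21 := h21 hK.
have H13 := h13 hrr hK; have H31 := h31 hK.
split; split => h; auto.
Qed.
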